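(* Let $G$ be a finite abelian group of odd order and consider any 2-coloring of $G$. Then the number of monochromatic nontrivial three-term arithmetic progressions $\{x,x+d,x+2d\}$ ($d\ne0$, counted as unordered sets) is at least $(|G|^2-4|G|+3)/8$, i.e. a fraction at least $\frac14-\frac{3}{4|G|}$ of all $\binom{|G|}{2}$ such progressions. Consequently there is a nonzero $d\in G$ such that $|G|^{-1}|\{x: x,x+d,x+2d\text{ same color}\}|\ge\frac14-\frac{3}{4|G|}$; in particular, if $|G|\ge\frac34\epsilon^{-1}$ some nonzero $d$ has this density at least $\frac14-\epsilon$. *)

(* Defs.v *)
From HB Require Import structures.
From mathcomp Require Import all_boot all_order all_algebra.
Set Implicit Arguments. Unset Strict Implicit. Unset Printing Implicit Defensive.
Import Order.TTheory GRing.Theory Num.Theory.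

Definition mono3 (G : finZmodType) (c : G -> bool) (x d : G) : bool :=
  (c x == c (x + d)%R) && (c (x + d)%R == c (x + d *+ 2)%R).

(* Each unordered progression {x,x+d,x+2d} corresponds to exactly the two
   pairs (x,d) and (x+2d,-d), so the number of progressions counted as
   unordered objects is half of this (total number of them: |G|(|G|-1)/2). *)
Definition mono_ordered (G : finZmodType) (c : G -> bool) : nat :=
  #|[set p : G * G | (p.2 != 0%R) && mono3 c p.1 p.2]|.

Definition mono_count_d (G : finZmodType) (c : G -> bool) (d : G) : nat :=
  #|[set x : G | mono3 c x d]|.

(* Main.v *)
Require Import Defs.
From HB Require Import structures.
From mathcomp Require Import all_boot all_order all_algebra.
From mathcomp Require Import zify ring lra.
Import Order.TTheory GRing.Theory Num.Theory.
Set Implicit Arguments. Unset Strict Implicit.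

Lemma card_bool (T : finType) (P : pred T) : #|[set x | P x]| = (\sum_x (P x : nat))%N.
Proof. rewrite -sum1_card big_mkcond; apply: eq_bigr => x _; rewrite inE; by case: (P x). Qed.

Lemma order_G (G : finZmodType) (d : G) : (d *+ #|G| = 0)%R.
Proof.
have H : (\sum_(x : G) x = \sum_(x : G) (x + d))%R by apply: (reindex_inj (addIr d)).
apply: (addrI (\sum_(x : G) x)%R); rewrite addr0 {2}H big_split /= sumr_const.
by [].
Qed.

Lemma dbl2_inj (G : finZmodType) : odd #|G| -> injective (fun d : G => (d *+ 2)%R).
Proof.
move=> odG x y /= /eqP; rewrite -subr_eq0 -mulrnBl => /eqP H.
apply/eqP; rewrite -subr_eq0; apply/eqP.
have Hn : #|G|.+1 = (2 * (#|G|.+1)./2)%N.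
  by rewrite -{1}(odd_double_half #|G|.+1) /= odG /= -mul2n.
have := order_G (x - y)%R; move/(congr1 (fun z => z + (x - y))%R).
by rewrite -mulrSr Hn mulrnA H mul0rn add0r => <-.
Qed.
Section Count.
Variables (G : finZmodType) (c : G -> bool).
Hypothesis odG : odd #|G|.

Definition T := (\sum_(x : G) \sum_(y : G) (c x != c y : nat))%N.

Lemma E1 : (\sum_(x : G) \sum_(d : G) (c x != c (x + d)%R : nat))%N = T.
Proof. rewrite /T; apply: eq_bigr => x _; by rewrite [RHS](reindex_inj (addrI x)). Qed.

Lemma E2 : (\sum_(x : G) \sum_(d : G) (c (x + d)%R != c (x + d *+ 2)%R : nat))%N = T.
Proof.
rewrite [LHS]exchange_big -E1 [RHS]exchange_big /=; apply: eq_bigr => d _.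
under eq_bigr => x _ do rewrite mulr2n addrA.
by rewrite [RHS](reindex_inj (addIr d)).
Qed.

Lemma E3 : (\sum_(x : G) \sum_(d : G) (c x != c (x + d *+ 2)%R : nat))%N = T.
Proof.
rewrite -E1; apply: eq_bigr => x _.
by rewrite [RHS](reindex_inj (dbl2_inj odG)).
Qed.

Definition M := (\sum_(x : G) \sum_(d : G) ((d != 0%R) && mono3 c x d : nat))%N.
Definition NM := (\sum_(x : G) \sum_(d : G) ((d != 0%R) && ~~ mono3 c x d : nat))%N.

Lemma termA (x d : G) : (2 * ((d != 0%R) && ~~ mono3 c x d) =
  (c x != c (x + d)%R) + (c (x + d)%R != c (x + d *+ 2)%R) + (c x != c (x + d *+ 2)%R))%N.
Proof.
rewrite /mono3; case: eqP => [->|_]; first by rewrite mul0rn !addr0 eqxx.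
by case: (c x); case: (c (x + d)%R); case: (c (x + d *+ 2)%R).
Qed.

Lemma termB (x d : G) : (((d != 0%R) && mono3 c x d) + ((d != 0%R) && ~~ mono3 c x d)
   + (d == 0%R) = 1)%N.
Proof. by case: eqP => _ //=; case: mono3. Qed.

Lemma NM_eq : (2 * NM = 3 * T)%N.
Proof.
rewrite /NM big_distrr /=.
under eq_bigr => x _ do rewrite big_distrr /=.
under eq_bigr => x _ do under eq_bigr => d _ do rewrite termA.
have -> : (3 * T = T + T + T)%N by lia.
rewrite -{1}E1 -{1}E2 -E3 -!big_split /=; apply: eq_bigr => x _; by rewrite -!big_split.
Qed.

Lemma sum_eq (n : nat) : (\sum_(x : G) n = #|G| * n)%N.
Proof. by rewrite sum_nat_const. Qed.

Lemma MN_eq : (M + NM + #|G| = #|G| * #|G|)%N.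
Proof.
have E : #|G| = (\sum_(x : G) \sum_(d : G) (d == 0%R : nat))%N.
  rewrite -[LHS]muln1 -sum_eq; apply: eq_bigr => x _.
  rewrite (bigD1 0%R) //= eqxx big1 // => d /negbTE -> //.
rewrite [in LHS]E /M /NM -!big_split /= -sum_eq; apply: eq_bigr => x _.
rewrite -!big_split /= -[#|G|]muln1 -sum_eq; apply: eq_bigr => d _.
exact: termB.
Qed.

Lemma T_bound : (2 * T + 1 <= #|G| * #|G|)%N.
Proof.
pose a := (\sum_(y : G) (c y : nat))%N.
pose b := (\sum_(y : G) (~~ c y : nat))%N.
have ab : (a + b = #|G|)%N.
  rewrite -big_split /= -[RHS]muln1 -sum_eq; apply: eq_bigr => y _; by case: (c y).
have -> : T = (a * b + b * a)%N.
  rewrite /T.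
  have -> : (a * b + b * a = \sum_(x : G) ((c x : nat) * b + (~~ c x : nat) * a))%N.
    by rewrite big_split /= -!big_distrl.
  apply: eq_bigr => x _; case: (c x) => /=.
    by rewrite mul1n mul0n addn0; apply: eq_bigr => y _; case: (c y).
  by rewrite mul0n mul1n; apply: eq_bigr => y _; case: (c y).
move: odG; rewrite -ab => oab.
clearbody a b.
have hk := odd_double_half (a + b); rewrite oab -mul2n in hk.
case: (ltngtP a b) => h.
- have [k ->] : exists k, b = (a + k.+1)%N by exists (b - a - 1)%N; lia.
  nia.
- have [k ->] : exists k, a = (b + k.+1)%N by exists (a - b - 1)%N; lia.
  nia.
- subst; lia.
Qed.

End Count.

Lemma nat_facts (G : finZmodType) (c : G -> bool) : odd #|G| ->
  (#|G| * #|G| + 3 <= 4 * mono_ordered c + 4 * #|G|)%N /\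
  ((1 < #|G|)%N -> exists2 d : G, d != 0%R & (#|G| <= 4 * mono_count_d c d + 3)%N).
Proof.
move=> odG.
have hMo : mono_ordered c = M c.
  by rewrite /mono_ordered card_bool /M pair_bigA.
have h1 := MN_eq c; have h2 := NM_eq c; have h3 := T_bound c odG.
have key : (#|G| * #|G| + 3 <= 4 * M c + 4 * #|G|)%N by nia.
split; first by rewrite hMo.
move=> n1.
have hMs : M c = (\sum_(d | d != 0%R) mono_count_d c d)%N.
  rewrite /M exchange_big /= [RHS]big_mkcond /=; apply: eq_bigr => d _.
  rewrite /mono_count_d card_bool; case: (d != 0%R) => //=.
  by rewrite big1.
have hcard : (0 < #|[pred d : G | d != 0%R]|)%N.
  rewrite (cardC1 0%R) -subn1 subn_gt0; exact: n1.
have [d0 Hd0 Hmax] := eq_bigmax_cond (mono_count_d c) hcard.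
exists d0; first exact: Hd0.
have hle : (M c <= (#|G| - 1) * mono_count_d c d0)%N.
  rewrite hMs -Hmax.
  have -> : (#|G| - 1 = #|[pred d : G | d != 0%R]|)%N by rewrite (cardC1 0%R) subn1.
  rewrite -sum_nat_const; apply: leq_sum => d Hd; exact: (leq_bigmax_cond d).
set K := mono_count_d c d0 in hle *.
set n := #|G| in key hle n1 *.
have [k hk] : exists k, n = k.+2 by exists (n - 2)%N; lia.
rewrite hk in key hle *.
have : ((k.+1) * k.+2 <= (k.+1) * (4 * K + 3))%N.
  have e : (k.+2 - 1 = k.+1)%N by lia. rewrite e in hle.
  nia.
rewrite leq_pmul2l //.
Qed.

Unset Implicit Arguments. Set Strict Implicit.
Local Open Scope ring_scope.

Theorem mainTheorem15 (G : finZmodType) (R : realFieldType) (c : G -> bool) :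
  odd #|G| ->
  let n : R := #|G|%:R in
  [/\ (mono_ordered c)%:R / 2 >= (n ^+ 2 - 4 * n + 3) / 8,
      (1 < #|G|)%N -> exists2 d : G, d != 0 & (mono_count_d c d)%:R / n >= 1 / 4 - 3 / (4 * n)
    & (1 < #|G|)%N -> forall eps : R, 0 < eps -> n >= 3 / 4 * eps^-1 ->
      exists2 d : G, d != 0 & (mono_count_d c d)%:R / n >= 1 / 4 - eps].
Proof.
move=> odG n.
have [A B] := nat_facts c odG.
have part2 : (1 < #|G|)%N -> exists2 d : G, d != 0 & (mono_count_d c d)%:R / n >= 1 / 4 - 3 / (4 * n).
  move=> n1; have [d Hd HK] := B n1; exists d => //.
  have n0 : 0 < n by rewrite ltr0n; lia.
  have : (n <= 4 * (mono_count_d c d)%:R + 3) by rewrite /n -(ler_nat R) in HK; rewrite natrD natrM in HK.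
  move=> HK'.
  rewrite -subr_ge0.
  have -> : (mono_count_d c d)%:R / n - (1 / 4 - 3 / (4 * n)) =
     (4 * (mono_count_d c d)%:R + 3 - n) / (4 * n) by field; lra.
  apply: divr_ge0; lra.
split.
- have : n * n + 3 <= 4 * (mono_ordered c)%:R + 4 * n.
    move: A; rewrite -(ler_nat R) !natrD !natrM => A0; rewrite /n; lra.
  move=> A'; rewrite expr2; lra.
- exact: part2.
- move=> n1 eps e0 he.
  have [d Hd HK] := part2 n1; exists d => //.
  have n0 : 0 < n by rewrite ltr0n; lia.
  have : 3 / (4 * n) <= eps.
    rewrite ler_pdivrMr; last lra.
    have := ler_wpM2r (_ : 0 <= 4 * eps) he.
    have -> : 3 / 4 * eps^-1 * (4 * eps) = 3 by field; lra.
    move=> /(_ ltac:(lra)); lra.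
  lra.
Qed.
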